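(* Let $S$ be a semigroup with finite $\mathcal{R}$-height whose kernel (minimal two-sided ideal) is completely simple, and let $B$ be a bi-ideal of $S$. Let $n$ be the maximum length of a chain of $\mathcal{R}$-classes of $S$ each of which intersects $B$. Then $\mathrm{H}_{\mathcal{R}}(B)\leq 3n-2$.
   Context: For a semigroup $S$, $S^1$ denotes $S$ with an identity adjoined if necessary. Green's preorder: $a\leq_{\mathcal{R}} b$ iff $aS^1\subseteq bS^1$; $\mathcal{R}$ is the associated equivalence. $\mathcal{R}$-classes are ordered by $R_a\leq R_b$ iff $a\leq_{\mathcal{R}} b$, and the $\mathcal{R}$-height $\mathrm{H}_{\mathcal{R}}(S)$ is the supremum of the cardinalities of chains of $\mathcal{R}$-classes. A bi-ideal of $S$ is a non-empty subset $B$ with $BS^1B\subseteq B$; its $\mathcal{R}$-height is computed in the semigroup $B$ itself. The kernel of $S$ is its unique minimal ideal (which exists when $S$ has finite $\mathcal{R}$-height). A semigroup is completely simple if it has no proper ideals and possesses both a minimal right ideal and a minimal left ideal. *)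

(* Defs.v *)
From Stdlib Require Import List Sorting.Sorted.
Set Implicit Arguments.

Section Semigroup.
Variable T : Type.
Variable mul : T -> T -> T.

(* Green's R-preorder computed inside the subsemigroup U:
   a <=_R b  iff  a U^1 is contained in b U^1, i.e. a = b or a = b u with u in U. *)
Definition Rle (U : T -> Prop) (a b : T) : Prop :=
  a = b \/ exists u, U u /\ a = mul b u.

Definition Rlt (U : T -> Prop) (a b : T) : Prop :=
  Rle U a b /\ ~ Rle U b a.

Definition Req (U : T -> Prop) (a b : T) : Prop :=
  Rle U a b /\ Rle U b a.

(* A chain of R-classes of U of cardinality (length l), given by
   representatives listed in strictly decreasing R-order. *)
Definition R_chain (U : T -> Prop) (l : list T) : Prop :=
  (forall x, In x l -> U x) /\ Sorted (fun x y => Rlt U y x) l.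

Definition finite_R_height (U : T -> Prop) : Prop :=
  exists N : nat, forall l, R_chain U l -> length l <= N.

Definition R_height_le (U : T -> Prop) (m : nat) : Prop :=
  forall l, R_chain U l -> length l <= m.

Definition R_chain_meeting (B : T -> Prop) (l : list T) : Prop :=
  R_chain (fun _ => True) l /\
  (forall x, In x l -> exists b, B b /\ Req (fun _ => True) x b).

Definition subset (A C : T -> Prop) : Prop := forall x, A x -> C x.
Definition set_eq (A C : T -> Prop) : Prop := forall x, A x <-> C x.

Definition ideal_of (U J : T -> Prop) : Prop :=
  subset J U /\ (exists j, J j) /\
  (forall u j, U u -> J j -> J (mul u j) /\ J (mul j u)).

Definition right_ideal_of (U J : T -> Prop) : Prop :=
  subset J U /\ (exists j, J j) /\ (forall u j, U u -> J j -> J (mul j u)).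

Definition left_ideal_of (U J : T -> Prop) : Prop :=
  subset J U /\ (exists j, J j) /\ (forall u j, U u -> J j -> J (mul u j)).

Definition minimal_right_ideal_of (U J : T -> Prop) : Prop :=
  right_ideal_of U J /\ forall J', right_ideal_of U J' -> subset J' J -> set_eq J' J.

Definition minimal_left_ideal_of (U J : T -> Prop) : Prop :=
  left_ideal_of U J /\ forall J', left_ideal_of U J' -> subset J' J -> set_eq J' J.

Definition completely_simple (U : T -> Prop) : Prop :=
  (forall x y, U x -> U y -> U (mul x y)) /\
  (forall J, ideal_of U J -> set_eq J U) /\
  (exists J, minimal_right_ideal_of U J) /\
  (exists J, minimal_left_ideal_of U J).

Definition is_kernel (K : T -> Prop) : Prop :=
  ideal_of (fun _ => True) K /\
  forall J, ideal_of (fun _ => True) J -> subset K J.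

Definition bi_ideal (B : T -> Prop) : Prop :=
  (exists b, B b) /\
  forall b s b', B b -> B b' -> B (mul b b') /\ B (mul (mul b s) b').

End Semigroup.

(* Main.v *)
Require Import Defs.
From Stdlib Require Import List Sorting.Sorted Lia Classical.

Lemma cs_R1 (T : Type) (mul : T -> T -> T)
  (assoc : forall x y z, mul x (mul y z) = mul (mul x y) z)
  (K : T -> Prop) (hK : is_kernel mul K) (hKcs : completely_simple mul K) :
  forall a c, K a -> K c -> exists y, K y /\ a = mul (mul a c) y.
Proof.
  intros a c Ka Kc.
  destruct hK as [[_ [_ Kid]] _].
  assert (KL : forall u j, K j -> K (mul u j)) by (intros; apply (Kid u j I); auto).
  assert (KR : forall u j, K j -> K (mul j u)) by (intros; apply (Kid u j I); auto).
  destruct hKcs as [_ [Hall [[M [[MK [[m0 Mm0] Mcl]] Mmin]] _]]].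
  set (Id0 := fun x => M x \/ exists k m, K k /\ M m /\ x = mul k m).
  assert (HI : ideal_of mul K Id0).
  { split; [|split].
    - intros x [Hx|[k [m [Hk [Hm ->]]]]]; [now apply MK|].
      apply KL. now apply MK.
    - exists m0; now left.
    - intros u j Hu [Hj|[k [m [Hk [Hm ->]]]]]; split.
      + right; exists u, j; auto.
      + left; now apply Mcl.
      + right; exists (mul u k), m; repeat split; auto; try (apply KL; auto); try (apply Mcl; auto); try (apply KR; auto); try (now rewrite assoc); try (now rewrite <- assoc).
      + right; exists k, (mul m u); repeat split; auto; try (apply KL; auto); try (apply Mcl; auto); try (apply KR; auto); try (now rewrite assoc); try (now rewrite <- assoc). }
  apply Hall in HI. destruct (proj2 (HI a) Ka) as [Ma|[k [m [Hk [Hm Ea]]]]].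
  - set (J := fun x => exists y, K y /\ x = mul (mul a c) y).
    assert (HJ : right_ideal_of mul K J).
    { split; [|split].
      - intros x [y [Hy ->]]. first [apply KL; auto | apply KR; auto].
      - exists (mul (mul a c) c), c; auto.
      - intros u j Hu [y [Hy ->]]. exists (mul y u); split.
        + first [apply KL; auto | apply KR; auto].
        + now rewrite assoc. }
    assert (JM : subset J M).
    { intros x [y [Hy ->]]. apply Mcl; auto. }
    destruct (proj2 (Mmin J HJ JM a) Ma) as [y Hy]. eauto.
  - set (J := fun x => M x /\ exists y, K y /\ mul k x = mul (mul a c) y).
    assert (HJ : right_ideal_of mul K J).
    { split; [|split].
      - intros x [Hx _]. now apply MK.
      - exists (mul (mul m c) c). split.
        + apply Mcl; auto.
        + exists c; split; auto. rewrite Ea, !assoc. reflexivity.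
      - intros u j Hu [Hj [y [Hy E]]]. split; [apply Mcl; auto|].
        exists (mul y u); split.
        + first [apply KL; auto | apply KR; auto].
        + rewrite assoc, E, assoc. reflexivity. }
    assert (JM : subset J M) by (intros x [Hx _]; exact Hx).
    destruct (proj2 (Mmin J HJ JM m) Hm) as [_ [y [Hy E]]].
    exists y; split; auto. rewrite Ea at 1. exact E.
Qed.

Lemma cs_L1 (T : Type) (mul : T -> T -> T)
  (assoc : forall x y z, mul x (mul y z) = mul (mul x y) z)
  (K : T -> Prop) (hK : is_kernel mul K) (hKcs : completely_simple mul K) :
  forall a c, K a -> K c -> exists z, K z /\ a = mul z (mul c a).
Proof.
  intros a c Ka Kc.
  destruct hK as [[_ [_ Kid]] _].
  assert (KL : forall u j, K j -> K (mul u j)) by (intros; apply (Kid u j I); auto).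
  assert (KR : forall u j, K j -> K (mul j u)) by (intros; apply (Kid u j I); auto).
  destruct hKcs as [_ [Hall [_ [M [[MK [[m0 Mm0] Mcl]] Mmin]]]]].
  set (Id0 := fun x => M x \/ exists m k, M m /\ K k /\ x = mul m k).
  assert (HI : ideal_of mul K Id0).
  { split; [|split].
    - intros x [Hx|[m [k [Hm [Hk ->]]]]]; [now apply MK|].
      apply KR. now apply MK.
    - exists m0; now left.
    - intros u j Hu [Hj|[m [k [Hm [Hk ->]]]]]; split.
      + left; now apply Mcl.
      + right; exists j, u; auto.
      + right; exists (mul u m), k; repeat split; auto; try (apply KL; auto); try (apply Mcl; auto); try (apply KR; auto); try (now rewrite assoc); try (now rewrite <- assoc).
      + right; exists m, (mul k u); repeat split; auto; try (apply KL; auto); try (apply Mcl; auto); try (apply KR; auto); try (now rewrite assoc); try (now rewrite <- assoc). }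
  apply Hall in HI. destruct (proj2 (HI a) Ka) as [Ma|[m [k [Hm [Hk Ea]]]]].
  - set (J := fun x => exists z, K z /\ x = mul z (mul c a)).
    assert (HJ : left_ideal_of mul K J).
    { split; [|split].
      - intros x [z [Hz ->]]. apply KL; auto.
      - exists (mul c (mul c a)), c; auto.
      - intros u j Hu [z [Hz ->]]. exists (mul u z); split.
        + first [apply KL; auto | apply KR; auto].
        + now rewrite assoc. }
    assert (JM : subset J M).
    { intros x [z [Hz ->]]. apply Mcl; auto. }
    destruct (proj2 (Mmin J HJ JM a) Ma) as [z Hz]. eauto.
  - set (J := fun x => M x /\ exists z, K z /\ mul x k = mul z (mul c a)).
    assert (HJ : left_ideal_of mul K J).
    { split; [|split].
      - intros x [Hx _]. now apply MK.
      - exists (mul c (mul c m)). split.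
        + apply Mcl; auto.
        + exists c; split; auto. rewrite Ea, !assoc. reflexivity.
      - intros u j Hu [Hj [z [Hz E]]]. split; [apply Mcl; auto|].
        exists (mul u z); split.
        + first [apply KL; auto | apply KR; auto].
        + rewrite <- assoc, E, assoc. reflexivity. }
    assert (JM : subset J M) by (intros x [Hx _]; exact Hx).
    destruct (proj2 (Mmin J HJ JM m) Hm) as [_ [z [Hz E]]].
    exists z; split; auto. rewrite Ea at 1. exact E.
Qed.

Lemma key_K (T : Type) (mul : T -> T -> T)
  (assoc : forall x y z, mul x (mul y z) = mul (mul x y) z)
  (K : T -> Prop) (hK : is_kernel mul K) (hKcs : completely_simple mul K)
  (B : T -> Prop) (hB : bi_ideal mul B) :
  forall x u, K x -> B x -> Rle mul B x (mul x u).
Proof.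
  intros x u Kx Bx.
  assert (KL : forall u j, K j -> K (mul u j)) by (intros; apply (proj2 (proj2 (proj1 hK)) u0 j I); auto).
  destruct (cs_R1 _ _ assoc _ hK hKcs x (mul u x) Kx (KL _ _ Kx)) as [y [_ Hy]].
  destruct (cs_R1 _ _ assoc _ hK hKcs x x Kx Kx) as [y0 [_ Hy0]].
  destruct (cs_L1 _ _ assoc _ hK hKcs x x Kx Kx) as [z0 [_ Hz0]].
  rewrite assoc in Hy, Hz0.
  assert (E1 : mul z0 x = mul x y0).
  { rewrite Hy0 at 1. rewrite !assoc. rewrite <- Hz0. reflexivity. }
  assert (E2 : mul (mul x z0) x = x).
  { rewrite <- assoc, E1, assoc. symmetry; exact Hy0. }
  right. exists (mul (mul x (mul y z0)) x). split.
  - apply (proj2 hB); auto.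
  - rewrite !assoc. rewrite <- Hy. symmetry; exact E2.
Qed.

Lemma Rle_trans' (T : Type) (mul : T -> T -> T)
  (assoc : forall x y z, mul x (mul y z) = mul (mul x y) z)
  (U : T -> Prop) (hU : forall x y, U x -> U y -> U (mul x y)) :
  forall a b c, Rle mul U a b -> Rle mul U b c -> Rle mul U a c.
Proof.
  intros a b c [->|[u [Hu ->]]] [->|[v [Hv ->]]].
  - now left.
  - right; exists v; auto.
  - right; exists u; auto.
  - right; exists (mul v u); split; auto; now rewrite assoc.
Qed.

Lemma Rlt_trans' (T : Type) (mul : T -> T -> T)
  (assoc : forall x y z, mul x (mul y z) = mul (mul x y) z)
  (U : T -> Prop) (hU : forall x y, U x -> U y -> U (mul x y)) :
  forall a b c, Rlt mul U a b -> Rlt mul U b c -> Rlt mul U a c.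
Proof.
  intros a b c [H1 H1'] [H2 H2']. split.
  - eapply Rle_trans'; eauto.
  - intro H. apply H2'. eapply Rle_trans'; eauto.
Qed.

Lemma Rle_BS (T : Type) (mul : T -> T -> T) (B : T -> Prop) a b :
  Rle mul B a b -> Rle mul (fun _ => True) a b.
Proof. intros [->|[u [_ ->]]]; [now left| right; exists u; auto]. Qed.

Lemma Sorted_app_l (A : Type) (R : A -> A -> Prop) :
  forall l1 l2, Sorted R (l1 ++ l2) -> Sorted R l1.
Proof.
  induction l1 as [|x l1 IH]; intros l2 H; simpl in *; [constructor|].
  apply Sorted_inv in H as [H1 H2]. constructor; [eapply IH; eauto|].
  destruct l1; simpl in *; constructor. now inversion H2.
Qed.

Lemma SS_last (A : Type) (R : A -> A -> Prop) :
  forall l a, StronglySorted R (l ++ a :: nil) -> forall y, In y l -> R y a.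
Proof.
  induction l as [|x l IH]; intros a H y Hy; simpl in *; [contradiction|].
  apply StronglySorted_inv in H as [H1 H2].
  destruct Hy as [->|Hy].
  - rewrite Forall_forall in H2. apply H2. apply in_or_app; right; now left.
  - eapply IH; eauto.
Qed.

Lemma Rlt_prod (T : Type) (mul : T -> T -> T) (U : T -> Prop) a b :
  Rlt mul U a b -> exists u, U u /\ a = mul b u.
Proof.
  intros [[->|H] H']; [exfalso; apply H'; now left| exact H].
Qed.

Lemma three_step (T : Type) (mul : T -> T -> T)
  (assoc : forall x y z, mul x (mul y z) = mul (mul x y) z)
  (B : T -> Prop) (hB : bi_ideal mul B) x y z w :
  Rlt mul B y x -> Rlt mul B z y -> Rlt mul B w z -> Rlt mul (fun _ => True) w x.
Proof.
  intros H1 H2 H3.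
  assert (hBm : forall a b, B a -> B b -> B (mul a b)) by (intros; apply (proj2 hB a a b); auto).
  split.
  - eapply Rle_trans'; [exact assoc| auto | |]; apply Rle_BS with B.
    + eapply Rle_trans'; eauto. apply H3. apply H2.
    + apply H1.
  - intro Hx. destruct H2 as [_ H2]. apply H2.
    destruct (Rlt_prod _ _ _ _ _ H1) as [u1 [Hu1 E1]].
    destruct (Rlt_prod _ _ _ _ _ H3) as [u3 [Hu3 E3]].
    destruct Hx as [E|[s [_ E]]]; right.
    + exists (mul u3 u1). split; auto. rewrite E1, E, E3. now rewrite assoc.
    + exists (mul (mul u3 s) u1). split; [apply (proj2 hB); auto|].
      rewrite E1, E, E3. now rewrite !assoc.
Qed.

Lemma build (T : Type) (mul : T -> T -> T)
  (assoc : forall x y z, mul x (mul y z) = mul (mul x y) z)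
  (K : T -> Prop) (hK : is_kernel mul K)
  (B : T -> Prop) (hB : bi_ideal mul B) (c : T) (Bc : B c) (Kc : K c) :
  forall p x l, length l <= p ->
  Sorted (fun a b => Rlt mul B b a) (x :: l) ->
  (forall y, In y (x :: l) -> B y /\ ~ K y /\ Rle mul (fun _ => True) c y) ->
  exists t, Sorted (fun a b => Rlt mul (fun _ => True) b a) (x :: t) /\
    (forall y, In y (x :: t) -> B y) /\ length (x :: l) + 3 <= 3 * length (x :: t).
Proof.
  assert (KR : forall u j, K j -> K (mul j u)) by (intros; apply (proj2 (proj2 (proj1 hK)) u j I); auto).
  assert (strict : forall y, ~ K y -> Rle mul (fun _ => True) c y ->
            Rlt mul (fun _ => True) c y).
  { intros y Hy Hc; split; auto. intros [->|[s [_ ->]]]; apply Hy; auto. }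
  induction p as [|p IH]; intros x l Hl Hs Hall.
  - destruct l; simpl in Hl; [|lia].
    exists (c :: nil). split; [|split].
    + apply Sorted_cons; [apply Sorted_cons; [apply Sorted_nil|apply HdRel_nil]| apply HdRel_cons; apply strict; apply Hall; now left].
    + intros y [->|[->|[]]]; auto. apply Hall; now left.
    + simpl; lia.
  - destruct l as [|y [|z [|w r]]].
    3: exists (c :: nil).
    2: exists (c :: nil).
    1: exists (c :: nil).
    1-3: split; [|split]; [apply Sorted_cons; [apply Sorted_cons; [apply Sorted_nil|apply HdRel_nil]| apply HdRel_cons; apply strict; apply Hall; now left]
                       | intros y' [->|[->|[]]]; auto; apply Hall; now left
                       | simpl; lia].
    simpl in Hl.
    destruct (IH w r ltac:(lia)) as [t [Ht1 [Ht2 Ht3]]].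
    + apply Sorted_inv in Hs as [Hs _]. apply Sorted_inv in Hs as [Hs _].
      apply Sorted_inv in Hs as [Hs _]. exact Hs.
    + intros y' Hy'. apply Hall. simpl in *; tauto.
    + exists (w :: t). split; [|split].
      * constructor; auto. constructor.
        apply Sorted_inv in Hs as [Hs H1]. apply HdRel_inv in H1.
        apply Sorted_inv in Hs as [Hs H2]. apply HdRel_inv in H2.
        apply Sorted_inv in Hs as [Hs H3]. apply HdRel_inv in H3.
        eapply three_step; eauto.
      * intros y' [->|Hy']; [apply Hall; now left | apply Ht2; exact Hy'].
      * simpl in *; lia.
Qed.

Theorem theorem3p3 (T : Type) (mul : T -> T -> T)
  (assoc : forall x y z, mul x (mul y z) = mul (mul x y) z)
  (hfin : finite_R_height mul (fun _ => True))
  (K : T -> Prop) (hK : is_kernel mul K) (hKcs : completely_simple mul K)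
  (B : T -> Prop) (hB : bi_ideal mul B)
  (n : nat)
  (hn_ex : exists l, R_chain_meeting mul B l /\ length l = n)
  (hn_max : forall l, R_chain_meeting mul B l -> length l <= n) :
  R_height_le mul B (3 * n - 2).
Proof.
  assert (hBm : forall a b, B a -> B b -> B (mul a b)) by (intros; apply (proj2 hB a a b); auto).
  assert (KR : forall u j, K j -> K (mul j u)) by (intros; apply (proj2 (proj2 (proj1 hK)) u j I); auto).
  assert (KL : forall u j, K j -> K (mul u j)) by (intros; apply (proj2 (proj2 (proj1 hK)) u j I); auto).
  assert (meet : forall t, Sorted (fun a b => Rlt mul (fun _ => True) b a) t ->
     (forall y, In y t -> B y) -> length t <= n).
  { intros t Ht HB. apply hn_max. split; [split; auto|].
    intros y Hy. exists y; split; auto. split; now left. }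
  assert (n1 : 1 <= n).
  { destruct hB as [[b Hb] _]. apply (meet (b :: nil)).
    - apply Sorted_cons; [apply Sorted_nil|apply HdRel_nil].
    - intros y [->|[]]; auto. }
  intros l [Hin Hs].
  destruct l as [|x0 l0]; [simpl; lia|].
  destruct (exists_last (l:=x0 :: l0) ltac:(discriminate)) as [l' [a Ea]].
  assert (HSS : StronglySorted (fun a b => Rlt mul B b a) (l' ++ a :: nil)).
  { rewrite <- Ea. apply Sorted_StronglySorted; auto.
    intros p q r H1 H2. eapply Rlt_trans'; eauto. }
  assert (Habove : forall y, In y l' -> Rlt mul B a y) by (apply (SS_last _ _ l' a HSS)).
  assert (HnK : forall y, In y l' -> ~ K y).
  { intros y Hy Ky. destruct (Habove y Hy) as [[E|[u [Hu E]]] H'].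
    - apply H'. left; now rewrite E.
    - apply H'. rewrite E. apply (key_K _ _ assoc _ hK hKcs _ hB); auto.
      apply Hin. rewrite Ea. apply in_or_app; now left. }
  assert (Ba : B a) by (apply Hin; rewrite Ea; apply in_or_app; right; now left).
  assert (HlenEq : length (x0 :: l0) = length l' + 1)
    by (rewrite Ea, length_app; simpl; lia).
  assert (Bb : forall y, In y l' -> B y) by (intros y Hy; apply Hin; rewrite Ea; apply in_or_app; now left).
  assert (Hle : forall y, In y l' -> Rle mul (fun _ => True) a y)
    by (intros y Hy; apply Rle_BS with B; apply (Habove y Hy)).
  destruct (classic (K a)) as [Ka|nKa].
  - destruct l' as [|x l'']; [simpl in *; lia|].
    assert (Hs' : Sorted (fun a b => Rlt mul B b a) (x :: l'')).
    { rewrite Ea in Hs. eapply Sorted_app_l; exact Hs. }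
    destruct (build _ _ assoc _ hK _ hB a Ba Ka (length l'') x l'' (le_n _) Hs')
      as [t [Ht1 [Ht2 Ht3]]].
    + intros y Hy. repeat split; auto.
    + pose proof (meet _ Ht1 Ht2). simpl in *. lia.
  - destruct (proj1 (proj2 (proj1 hK))) as [k Hk].
    set (c := mul (mul a k) a).
    assert (Bc : B c) by (apply (proj2 hB); auto).
    assert (Kc : K c) by (apply KR; apply KL; auto).
    assert (Hca : Rle mul (fun _ => True) c a) by (right; exists (mul k a); split; auto; unfold c; now rewrite assoc).
    destruct (build _ _ assoc _ hK _ hB c Bc Kc (length l0) x0 l0 (le_n _) Hs)
      as [t [Ht1 [Ht2 Ht3]]].
    + intros y Hy. rewrite Ea in Hy. apply in_app_or in Hy.
      destruct Hy as [Hy|[<-|[]]].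
      * repeat split; auto. eapply Rle_trans'; eauto.
      * repeat split; auto.
    + pose proof (meet _ Ht1 Ht2). simpl in *. lia.
Qed.
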